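(* Let $D$ be a division ring, $R$ a maximal subring of $D$, and $\lambda\in D$. Then $\lambda R\subseteq R\lambda$ if and only if $R\lambda\subseteq \lambda R$ if and only if $\lambda R=R\lambda$.
   Context: All rings are associative unital and subrings share the identity. A maximal subring of a ring $T$ is a proper subring maximal under inclusion among proper subrings of $T$. *)

(* Defs.v *)
From HB Require Import structures.
From mathcomp Require Import all_boot all_algebra.
Set Implicit Arguments. Unset Strict Implicit. Unset Printing Implicit Defensive.
Import GRing.Theory.
Local Open Scope ring_scope.

(* A division ring: a (nontrivial) unit ring in which every nonzero element
   is invertible.  MathComp has no bundled noncommutative division ring. *)
Definition is_division_ring (D : unitRingType) : Prop :=
  forall x : D, x != 0 -> x \is a GRing.unit.

Definition subring (T : pzRingType) (S : T -> Prop) : Prop :=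
  [/\ S 1,
      (forall x y, S x -> S y -> S (x - y)) &
      (forall x y, S x -> S y -> S (x * y))].

Definition proper_subring (T : pzRingType) (S : T -> Prop) : Prop :=
  subring S /\ exists x, ~ S x.

Definition maximal_subring (T : pzRingType) (R : T -> Prop) : Prop :=
  proper_subring R /\
  forall S : T -> Prop, proper_subring S -> (forall x, R x -> S x) ->
    forall x, S x -> R x.

Definition lmul_set (T : pzRingType) (l : T) (R : T -> Prop) : T -> Prop :=
  fun x => exists2 r, R r & x = l * r.
Definition rmul_set (T : pzRingType) (R : T -> Prop) (l : T) : T -> Prop :=
  fun x => exists2 r, R r & x = r * l.

Definition set_incl (T : Type) (A B : T -> Prop) : Prop := forall x, A x -> B x.
Definition set_eq (T : Type) (A B : T -> Prop) : Prop := forall x, A x <-> B x.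

(* Main.v *)
Require Import Defs.
From mathcomp Require Import all_boot all_algebra.
Import GRing.Theory.
Local Open Scope ring_scope.

Lemma conj_key (D : unitRingType) (R : D -> Prop) (hR : maximal_subring R)
  (u : D) (hu : u \is a GRing.unit) :
  (forall r, R r -> R (u * r * u^-1)) -> forall r, R r -> R (u^-1 * r * u).
Proof.
move=> H r Rr.
case: hR => [[[R1 RB RM] [x nx]] Hmax].
pose S := fun y => R (u * y * u^-1).
have HS : proper_subring S.
  split; first split.
  - by rewrite /S mulr1 divrr.
  - move=> a b; rewrite /S => Ha Hb.
    have -> : u * (a - b) * u^-1 = u * a * u^-1 - u * b * u^-1.
      by rewrite mulrBr mulrBl.
    exact: RB.
  - move=> a b; rewrite /S => Ha Hb.
    have -> : u * (a * b) * u^-1 = (u * a * u^-1) * (u * b * u^-1).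
      by rewrite !mulrA (mulrVK hu).
    exact: RM.
  - exists (u^-1 * x * u); rewrite /S.
    by rewrite !mulrA mulrV // mul1r mulrK.
have := Hmax S HS H (u^-1 * r * u).
rewrite /S !mulrA mulrV // mul1r mulrK //.
by move=> /(_ Rr).
Qed.

Theorem lemma2p1 (D : unitRingType) (hD : is_division_ring D)
  (R : D -> Prop) (hR : maximal_subring R) (l : D) :
  (set_incl (lmul_set l R) (rmul_set R l) <->
   set_incl (rmul_set R l) (lmul_set l R)) /\
  (set_incl (rmul_set R l) (lmul_set l R) <->
   set_eq (lmul_set l R) (rmul_set R l)).
Proof.
have [->|l0] := eqVneq l 0.
  have hA : set_incl (lmul_set 0 R) (rmul_set R 0).
    move=> x [r _ ->]; exists 1; last by rewrite mul0r mulr0.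
    by case: hR => [[[]]].
  have hB : set_incl (rmul_set R 0) (lmul_set 0 R).
    move=> x [r _ ->]; exists 1; last by rewrite mul0r mulr0.
    by case: hR => [[[]]].
  split; split => // _; by move=> x; split; [apply: hA|apply: hB].
have lu := hD l l0.
have Aiff : set_incl (lmul_set l R) (rmul_set R l) <->
            (forall r, R r -> R (l * r * l^-1)).
  split.
    move=> H r Rr; have [r' Rr' e] := H (l * r) (ex_intro2 _ _ r Rr erefl).
    by rewrite e mulrK.
  move=> H x [r Rr ->]; exists (l * r * l^-1); first exact: H.
  by rewrite mulrVK.
have Biff : set_incl (rmul_set R l) (lmul_set l R) <->
            (forall r, R r -> R (l^-1 * r * l)).
  split.
    move=> H r Rr; have [r' Rr' e] := H (r * l) (ex_intro2 _ _ r Rr erefl).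
    by rewrite -mulrA e mulrA mulVr // mul1r.
  move=> H x [r Rr ->]; exists (l^-1 * r * l); first exact: H.
  by rewrite !mulrA mulrV // mul1r.
have AB : set_incl (lmul_set l R) (rmul_set R l) <->
          set_incl (rmul_set R l) (lmul_set l R).
  split.
    move=> /Aiff H; apply/Biff; exact: conj_key.
  move=> /Biff H; apply/Aiff.
  have := @conj_key D R hR l^-1; rewrite unitrV invrK; move=> /(_ lu H); exact.
split => //; split.
  move=> HB x; split; last exact: HB.
  exact: (proj2 AB HB).
by move=> HE x /HE.
Qed.
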